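(* Consider any realized trajectory of the patient model in the context, let $\lambda_1>0$, $z_t:=[x_t\ u_t^\top\ d_t^\top]^\top$ and $\bar V_t:=\lambda_1I_{2M+1}+\sum_{s=1}^{t-1}z_sz_s^\top$. Then $$\sum_{t=1}^T\|z_t\|^2_{\bar V_t^{-1}}\leq(2M+1)\log\Big(1+\frac{T(C_x^2+2)}{(2M+1)\lambda_1}\Big)\Big[2+\frac{C_x^2+2}{\log(2)\lambda_1}\Big],$$ where $C_x:=\frac{\bar b+\bar c+\bar w}{1-\bar a}$.
   Context: Patient model: $M\geq1$ treatments; $\mathcal U:=\{v\in\{0,1\}^M:\|v\|_0\leq1\}$. $x_{t+1}=ax_t+b^\top u_t+c^\top d_t+w_t$ with actions $u_t\in\mathcal U$ and adherence $d_t\in\mathcal U$, $d^i_t\mid x_t,u^i_t\sim\mathrm{Bernoulli}(u^i_t\sigma(x_t+\mu_i))$, $\sigma$ the sigmoid; $x_1$ distributed as the noise. Parameters $a\in[0,\bar a]$ (known $\bar a\in(0,1)$), $\|b\|_\infty\leq\bar b$, $\|c\|_\infty\leq\bar c$, $\mu\in[-\bar\mu,\bar\mu]^M$. Noise i.i.d., zero-symmetric, $\sigma_s^2$-subgaussian, $|w_t|\leq\bar w$ ($\bar w>0$), log-concave density, known variance. $\|v\|_A:=\sqrt{v^\top Av}$. *)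

(* Defs.v *)
From HB Require Import structures.
From mathcomp Require Import all_boot all_order all_algebra.
From mathcomp Require Import all_classical all_reals all_analysis.
Set Implicit Arguments. Unset Strict Implicit. Unset Printing Implicit Defensive.
Import Order.TTheory GRing.Theory Num.Theory.
Local Open Scope ring_scope.

Definition in_U (R : realType) (M : nat) (v : 'cV[R]_M) : bool :=
  [forall i, (v i ord0 == 0%R) || (v i ord0 == 1%R)] && (#|[set i | v i ord0 != 0%R]| <= 1)%N.

Definition zvec (R : realType) (M : nat) (x : R) (u d : 'cV[R]_M)
  : 'cV[R]_(1 + (M + M)) := col_mx (x%:M) (col_mx u d).

Definition Vbar (R : realType) (M : nat) (lambda1 : R)
  (z : nat -> 'cV[R]_(1 + (M + M))) (t : nat) : 'M[R]_(1 + (M + M)) :=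
  lambda1 *: 1%:M + \sum_(1 <= s < t) (z s *m (z s)^T).

Definition wnorm2 (R : realType) (n : nat) (A : 'M[R]_n) (v : 'cV[R]_n) : R :=
  ((v^T *m A *m v) ord0 ord0).

(* Main.v *)
Require Import Defs.
Set Warnings "-notation-overridden,-ambiguous-paths,-notation-incompatible-prefix".
From HB Require Import structures.
From mathcomp Require Import all_boot all_order all_algebra.
From mathcomp Require Import all_classical all_reals all_analysis.
From mathcomp Require Import lra ring.
Import Order.TTheory GRing.Theory Num.Theory.
Local Open Scope ring_scope.

Lemma agm (R : realType) m (E : 'I_m -> R) : (forall i, 0 <= E i) ->
  \prod_i E i <= ((\sum_i E i) / m%:R) ^+ m.
Proof.
move=> h; have := @leif_AGM R _ predT E (fun i _ => h i).
case=> + _; rewrite card_ord.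
by [].
Qed.


Lemma scal (R : realType) (L lam y : R) : 0 < lam -> 0 <= L -> 0 <= y ->
  lam * y <= L -> y <= (2 + L / (ln 2 * lam)) * ln (1 + y).
Proof.
move=> hl hL hy hly.
have l2 : 0 < ln (2 : R) by apply: ln_gt0; rewrite ltr1n.
have ly0 : 0 <= ln (1 + y) by apply: ln_ge0; rewrite lerDl.
have c0 : 0 <= L / (ln 2 * lam) by rewrite divr_ge0 // ltW // mulr_gt0.
have cl : 0 <= L / (ln 2 * lam) * ln (1 + y) by rewrite mulr_ge0.
case: (leP y 1) => hy1.
  have y1p : 0 < 1 + y by rewrite ltr_wpDr.
  have hlt : -1 < - (y / (1 + y)).
    rewrite ltrN2 ltr_pdivrMr // mul1r; lra.
  have := le_ln1Dx hlt.
  have -> : 1 + - (y / (1 + y)) = (1 + y)^-1.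
    by field; rewrite gt_eqF.
  rewrite lnV ?posrE // lerN2 ler_pdivrMr // => hk.
  have : ln (1 + y) * y <= ln (1 + y) by rewrite ler_piMr.
  rewrite mulrDr mulr1 in hk.
  rewrite mulrDl; lra.
have h2 : ln 2 <= ln (1 + y).
  rewrite ler_ln ?posrE //; lra.
have hyl : y <= L / lam by rewrite ler_pdivlMr // mulrC.
have e : L / lam = L / (ln 2 * lam) * ln 2.
  by field; rewrite !gt_eqF.
have : L / (ln 2 * lam) * ln 2 <= L / (ln 2 * lam) * ln (1 + y).
  by rewrite ler_wpM2l.
rewrite mulrDl; lra.
Qed.

Section Lin.
Variable R : realType.
Local Set Implicit Arguments.

Lemma det_rank1 n (a : 'cV[R]_n) (b : 'rV[R]_n) :
  \det (1%:M + a *m b) = 1 + (b *m a) 0 0.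
Proof.
pose X : 'M[R]_(n + 1) := block_mx 1%:M a (- b) 1%:M.
pose E : 'M[R]_(n + 1) := block_mx 1%:M 0 b 1%:M.
have dE : \det E = 1 by rewrite det_lblock !det1 mulr1.
have h1 : E *m X = block_mx 1%:M a 0 (1%:M + b *m a).
  rewrite /E /X mulmx_block !mul1mx !mul0mx !addr0 mulmx1 subrr addrC.
  done.
have h2 : X *m E = block_mx (1%:M + a *m b) a 0 1%:M.
  rewrite /E /X mulmx_block !mulmx1 !mulmx0 ?addr0 ?mul1mx.
  by rewrite !add0r addNr.
have hX1 := congr1 determinant h1; rewrite det_mulmx dE mul1r det_ublock det1 mul1r in hX1.
have hX2 := congr1 determinant h2; rewrite det_mulmx dE mulr1 det_ublock det1 mulr1 in hX2.
rewrite -hX2 hX1.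
by rewrite det_mx11 !mxE.
Qed.

Definition qf n (A : 'M[R]_n) (v : 'cV[R]_n) : R := (v^T *m A *m v) 0 0.
Arguments qf {n}.

Lemma qf_delta n (A : 'M[R]_n) (i : 'I_n) : qf A (delta_mx i 0) = A i i.
Proof. by rewrite /qf trmx_delta -rowE -colE !mxE. Qed.

Lemma delta_neq0 n (i : 'I_n) : delta_mx i (0 : 'I_1) != 0 :> 'cV[R]_n.
Proof.
apply/negP => /eqP/matrixP/(_ i 0); rewrite !mxE !eqxx /=.
by move/eqP; rewrite oner_eq0.
Qed.

Lemma hadamard n (A : 'M[R]_n) : A^T = A ->
  (forall v : 'cV_n, v != 0 -> 0 < qf A v) -> \det A <= \prod_i A i i.
Proof.
elim: n A => [|n IH] A sA pA; first by rewrite det_mx00 big_ord0.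
pose B : 'M[R]_(1 + n) := A.
pose a := ulsubmx B; pose r := ursubmx B; pose c := dlsubmx B; pose D := drsubmx B.
have eB : B = block_mx a r c D := esym (submxK B).
pose al := a 0 0.
have al_gt0 : 0 < al.
  have := pA _ (delta_neq0 (lshift n (0 : 'I_1))).
  by rewrite qf_delta /al /a !mxE.
have al_neq0 : al != 0 by rewrite gt_eqF.
have ea : a = al%:M by apply: mx11_scalar.
have ecr : c^T = r by rewrite /c trmx_dlsub sA.
have erc : r^T = c by rewrite -ecr trmxK.
have eD : D^T = D by rewrite /D trmx_drsub sA.
pose S := D - al^-1 *: (c *m r).
pose L : 'M[R]_(1 + n) := block_mx 1%:M 0 (- (al^-1 *: c)) 1%:M.
have hLB : L *m B = block_mx a r 0 S.
  rewrite [in LHS]eB /L mulmx_block !mul1mx !mul0mx !addr0 ea mul_mx_scalar.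
  rewrite scalerN scalerA mulrV ?unitfE // scale1r addNr.
  by rewrite mulNmx -scalemxAl addrC.
have hLT : L^T = block_mx 1%:M (- (al^-1 *: r)) 0 1%:M.
  by rewrite /L tr_block_mx !trmx1 trmx0 linearN /= linearZ /= ecr.
have hLBL : L *m B *m L^T = block_mx a 0 0 S.
  rewrite hLB hLT mulmx_block !mulmx1 !mulmx0 !mul0mx !addr0 add0r ea.
  by rewrite mul_scalar_mx scalerN scalerA mulrV ?unitfE // scale1r addNr.
have hdet : \det B = al * \det S.
  have := congr1 determinant hLB.
  rewrite det_mulmx /L det_lblock !det1 mul1r det_ublock ea det_scalar1 !mul1r; move=> h; exact: h.
have sS : S^T = S.
  by rewrite /S linearB /= linearZ /= trmx_mul eD ecr erc.
have pS : forall v : 'cV_n, v != 0 -> 0 < qf S v.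
  move=> v v0; pose x := col_mx (0 : 'cV[R]_1) v.
  have hx : L^T *m x != 0.
    rewrite hLT /x mul_block_col !mul0mx !mulmx0 !add0r mul1mx col_mx_eq0.
    by rewrite negb_and v0 orbT.
  have := pA _ hx.
  have -> : qf A (L^T *m x) = qf S v.
    rewrite /qf trmx_mul trmxK.
    have -> : x^T *m L *m A *m (L^T *m x) = x^T *m (L *m B *m L^T) *m x.
      by rewrite !mulmxA.
    rewrite hLBL /x tr_col_mx mul_row_block mul_row_col.
    by rewrite trmx0 !mul0mx !mulmx0 ?add0r ?addr0 ?mul0mx ?add0r.
  by [].
have hSii : forall i, 0 <= S i i <= D i i.
  move=> i; apply/andP; split.
    by apply: ltW; rewrite -qf_delta; apply: pS; apply: delta_neq0.
  have : 0 <= al^-1 * (c i 0 * c i 0).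
    by apply: mulr_ge0; [rewrite invr_ge0 ltW | rewrite -expr2 sqr_ge0].
  rewrite /S -ecr !mxE big_ord1 !mxE.
  lra.
change (\det B <= \prod_(i < 1 + n) B i i).
rewrite big_split_ord big_ord1 hdet.
have -> : B (lshift n 0) (lshift n 0) = al by rewrite /al /a !mxE.
have -> : \prod_(i < n) B (rshift 1 i) (rshift 1 i) = \prod_i D i i.
  by apply: eq_bigr => i _; rewrite /D !mxE.
rewrite ler_pM2l //; apply: le_trans (IH S sS pS) _.
by apply: ler_prod => i _; apply: hSii.
Qed.

Definition n2 n (v : 'cV[R]_n) : R := (v^T *m v) 0 0.

Lemma n2E n (v : 'cV[R]_n) : n2 v = \sum_i v i 0 ^+ 2.
Proof. by rewrite /n2 mxE; apply: eq_bigr => i _; rewrite mxE expr2. Qed.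

Lemma n2_ge0 n (v : 'cV[R]_n) : 0 <= n2 v.
Proof. by rewrite n2E; apply: sumr_ge0 => i _; apply: sqr_ge0. Qed.

Lemma n2_gt0 n (v : 'cV[R]_n) : v != 0 -> 0 < n2 v.
Proof.
move=> v0; rewrite lt_neqAle n2_ge0 andbT; apply/negP => /eqP h.
move/negP: v0; apply; apply/eqP/matrixP => i j; rewrite (ord1 j) mxE.
have := h; rewrite n2E => /esym/eqP; rewrite psumr_eq0; last by move=> k _; apply: sqr_ge0.
by move=> /allP /(_ i (mem_index_enum _)) /implyP /(_ isT); rewrite sqrf_eq0 => /eqP.
Qed.

Lemma qfD n (A B : 'M[R]_n) v : qf (A + B) v = qf A v + qf B v.
Proof. by rewrite /qf mulmxDr mulmxDl mxE. Qed.

Lemma qfZ n k (A : 'M[R]_n) v : qf (k *: A) v = k * qf A v.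
Proof. by rewrite /qf -scalemxAr -scalemxAl mxE. Qed.

Lemma qf_sum n (I : Type) (r : seq I) (P : pred I) (F : I -> 'M[R]_n) v :
  qf (\sum_(i <- r | P i) F i) v = \sum_(i <- r | P i) qf (F i) v.
Proof. by rewrite /qf mulmx_sumr mulmx_suml summxE. Qed.

Lemma qf1 n (v : 'cV[R]_n) : qf 1%:M v = n2 v.
Proof. by rewrite /qf mulmx1. Qed.

Lemma tr11 (A : 'M[R]_1) : A^T 0 0 = A 0 0.
Proof. by rewrite mxE. Qed.

Lemma qf_rank1 n (z v : 'cV[R]_n) : qf (z *m z^T) v = ((v^T *m z) 0 0) ^+ 2.
Proof.
rewrite /qf !mulmxA -(mulmxA _ z^T) -[z^T *m v]trmxK trmx_mul trmxK.
by rewrite [(_ *m _) 0 0]mxE big_ord1 tr11 expr2.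
Qed.

Lemma qf_rank1_ge0 n (z v : 'cV[R]_n) : 0 <= qf (z *m z^T) v.
Proof. by rewrite qf_rank1 sqr_ge0. Qed.


Variables (n : nat) (lam : R) (z : nat -> 'cV[R]_n).
Hypothesis hlam : 0 < lam.

Definition V t : 'M[R]_n := lam *: 1%:M + \sum_(1 <= s < t) (z s *m (z s)^T).

Lemma V_sym t : (V t)^T = V t.
Proof.
rewrite /V linearD /= linearZ /= trmx1 linear_sum /=; congr (_ + _).
by apply: eq_bigr => s _; rewrite trmx_mul trmxK.
Qed.

Lemma V_qf t v : lam * n2 v <= qf (V t) v.
Proof.
rewrite /V qfD qfZ qf1 lerDl qf_sum; apply: sumr_ge0 => s _.
exact: qf_rank1_ge0.
Qed.

Lemma V_pd t v : v != 0 -> 0 < qf (V t) v.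
Proof. by move=> v0; apply: lt_le_trans (V_qf t v); rewrite mulr_gt0 // n2_gt0. Qed.

Lemma V_rec t : (1 <= t)%N -> V t.+1 = V t + z t *m (z t)^T.
Proof. by move=> t1; rewrite /V big_nat_recr //= addrA. Qed.

Lemma V1 : V 1 = lam%:M.
Proof. by rewrite /V big_geq // addr0 scalemx1. Qed.

Definition y t := qf (invmx (V t)) (z t).

Lemma y_props t : V t \in unitmx -> 0 <= y t /\ lam * y t <= n2 (z t).
Proof.
move=> Vu; pose w := invmx (V t) *m z t.
have Vw : V t *m w = z t by rewrite /w mulKVmx.
have yw : y t = qf (V t) w.
  have -> : qf (V t) w = (w^T *m z t) 0 0 by rewrite /qf -mulmxA Vw.
  by rewrite -tr11 trmx_mul trmxK /y /qf /w mulmxA.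
have yd : y t = \sum_i w i 0 * z t i 0.
  rewrite yw /qf -mulmxA Vw mxE; apply: eq_bigr => i _; by rewrite mxE.
have hq := V_qf t w; rewrite -yw in hq.
have n2w := n2_ge0 w.
split; first by apply: le_trans hq; rewrite mulr_ge0 // ltW.
have key : 0 <= \sum_i (z t i 0 - lam * w i 0) ^+ 2.
  by apply: sumr_ge0 => i _; apply: sqr_ge0.
have ex : \sum_i (z t i 0 - lam * w i 0) ^+ 2 =
    n2 (z t) - lam * 2 * y t + lam ^+ 2 * n2 w.
  rewrite yd !n2E !mulr_sumr -sumrN -!big_split /=.
  by apply: eq_bigr => i _; ring.
have h2 : lam * (lam * n2 w) <= lam * y t by rewrite ler_pM2l.
rewrite ex in key.
have : lam ^+ 2 * n2 w = lam * (lam * n2 w) by rewrite expr2 mulrA.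
lra.
Qed.


Lemma V_det t : (1 <= t)%N ->
  [/\ V t \in unitmx, 0 < \det (V t) &
     \det (V t) = lam ^+ n * \prod_(1 <= s < t) (1 + y s)].
Proof.
elim: t => [|t IH] // _.
have lam0 : lam != 0 by rewrite gt_eqF.
case: (posnP t) => [->|tpos].
  rewrite V1 det_scalar big_geq // mulr1; split => //.
    by rewrite unitmxE det_scalar unitfE expf_neq0.
  by rewrite exprn_gt0.
have [Vu dpos dV] := IH tpos; have [y0 _] := y_props t Vu.
have e : V t.+1 = V t *m (1%:M + (invmx (V t) *m z t) *m (z t)^T).
  by rewrite mulmxDr mulmx1 !mulmxA mulmxV // mul1mx V_rec.
have dV1 : \det (V t.+1) = \det (V t) * (1 + y t).
  by rewrite e det_mulmx det_rank1 /y /qf mulmxA.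
have dpos1 : 0 < \det (V t.+1) by rewrite dV1 mulr_gt0 // ltr_wpDr.
split => //; first by rewrite unitmxE unitfE gt_eqF.
by rewrite dV1 dV big_nat_recr //= mulrA.
Qed.


Lemma V_trace t : \tr (V t) = lam * n%:R + \sum_(1 <= s < t) n2 (z s).
Proof.
rewrite /V mxtraceD scalemx1 mxtrace_scalar mulr_natr; congr (_ + _).
rewrite raddf_sum; apply: eq_bigr => s _ /=.
by rewrite mxtrace_mulC /mxtrace big_ord1.
Qed.


Lemma det_bound T L : (0 < n)%N -> (forall t, (1 <= t)%N -> n2 (z t) <= L) ->
  \prod_(1 <= s < T.+1) (1 + y s) <= (1 + T%:R * L / (n%:R * lam)) ^+ n.
Proof.
move=> npos hL.
have [_ _ dV] := V_det (T.+1) (ltn0Sn T).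
have hd := hadamard (V_sym T.+1) (@V_pd T.+1).
have diag0 : forall i, 0 <= V T.+1 i i.
  by move=> i; rewrite -qf_delta ltW // V_pd // delta_neq0.
have ha := @agm R n _ diag0.
have tr_eq : \sum_i V T.+1 i i = \tr (V T.+1) by [].
rewrite tr_eq V_trace in ha.
have sL : \sum_(1 <= s < T.+1) n2 (z s) <= T%:R * L.
  apply: le_trans (ler_sum_nat (G := fun _ => L) _) _.
    by move=> s /andP [s1 _]; apply: hL.
  by rewrite sumr_const_nat subn1 /= mulr_natl.
set S := \sum_(1 <= s < T.+1) n2 (z s) in ha sL.
have S0 : 0 <= S by apply: sumr_ge0 => s _; apply: n2_ge0.
have nR : 0 < n%:R :> R by rewrite ltr0n.
have e1 : lam * (1 + T%:R * L / (n%:R * lam)) = (lam * n%:R + T%:R * L) / n%:R.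
  by field; rewrite !gt_eqF.
have h0 : 0 <= (lam * n%:R + S) / n%:R.
  by rewrite divr_ge0 ?addr_ge0 ?mulr_ge0 // ltW.
have h1 : (lam * n%:R + S) / n%:R <= lam * (1 + T%:R * L / (n%:R * lam)).
  by rewrite e1 ler_pM2r ?invr_gt0 // lerD2l.
have h2 : ((lam * n%:R + S) / n%:R) ^+ n <= (lam * (1 + T%:R * L / (n%:R * lam))) ^+ n.
  by apply: lerXn2r; rewrite ?nnegrE //; apply: le_trans h1.
rewrite -(ler_pM2l (exprn_gt0 n hlam)) -dV.
by rewrite -exprMn; apply: le_trans hd (le_trans ha h2).
Qed.


Lemma V0 : V 0 = V 1.
Proof. by rewrite /V !big_geq. Qed.

Lemma V_unit t : V t \in unitmx.
Proof.
case: t => [|t]; first by rewrite V0; have [] := V_det 1 (ltnSn 0).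
by have [] := V_det t.+1 (ltn0Sn t).
Qed.

Lemma sum_y_bound T L : (0 < n)%N -> 0 <= L ->
  (forall t, (1 <= t)%N -> n2 (z t) <= L) ->
  \sum_(1 <= t < T.+1) y t <=
    n%:R * ln (1 + T%:R * L / (n%:R * lam)) * (2 + L / (ln 2 * lam)).
Proof.
move=> npos hL0 hL.
set K := 2 + L / (ln 2 * lam).
have l2 : 0 < ln (2 : R) by apply: ln_gt0; rewrite ltr1n.
have K0 : 0 <= K by rewrite /K addr_ge0 // divr_ge0 // ltW // mulr_gt0.
have y0 : forall t, 0 <= y t by move=> t; have [] := y_props t (V_unit t).
have yb : forall t, (1 <= t)%N -> y t <= K * ln (1 + y t).
  move=> t t1; have [_ h] := y_props t (V_unit t).
  by apply: scal => //; apply: le_trans h (hL t t1).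
have step : forall m, \sum_(1 <= t < m.+1) y t <= K * ln (\prod_(1 <= t < m.+1) (1 + y t)).
  elim=> [|m IH]; first by rewrite !big_geq // ln1 mulr0.
  rewrite big_nat_recr //= [X in _ <= K * ln X]big_nat_recr //= lnM ?posrE; last 2 first.
  - by apply: prodr_gt0 => t _; rewrite ltr_wpDr.
  - by rewrite ltr_wpDr.
  by rewrite mulrDr lerD // yb.
apply: le_trans (step T) _.
have c0 : 0 <= T%:R * L / (n%:R * lam) by rewrite divr_ge0 ?mulr_ge0 // ltW // mulr_gt0 // ltr0n.
have P0 : 0 < \prod_(1 <= t < T.+1) (1 + y t) by apply: prodr_gt0 => t _; rewrite ltr_wpDr.
have c1 : 0 < 1 + T%:R * L / (n%:R * lam) by rewrite ltr_wpDr.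
rewrite [X in _ <= X]mulrC; apply: ler_wpM2l => //; rewrite mulr_natl -lnXn //.
by rewrite ler_ln ?posrE ?exprn_gt0 //; apply: det_bound.
Qed.

End Lin.


Arguments n2 {R n}.
Local Set Implicit Arguments.

Lemma inU01 (R : realType) M (v : 'cV[R]_M) : in_U v ->
  forall i, (v i 0 == 0) || (v i 0 == 1).
Proof. by case/andP => /forallP h _ i; apply: h. Qed.
Arguments inU01 {R M v}.

Lemma inU_abs_sum (R : realType) M (v : 'cV[R]_M) : in_U v -> \sum_i `|v i 0| <= 1.
Proof.
move=> hv; have h01 := inU01 hv; case/andP: hv => _ hc.
have -> : \sum_i `|v i 0| = #|[set i | v i 0 != 0]|%:R.
  rewrite -sum1_card natr_sum [RHS]big_mkcond /=; apply: eq_bigr => i _.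
  rewrite inE; case/orP: (h01 i) => /eqP ->; rewrite ?eqxx ?normr0 ?normr1 ?oner_eq0 //.
by rewrite -[X in _ <= X](mulr1n 1) ler_nat.
Qed.
Arguments inU_abs_sum {R M v}.

Lemma inU_n2 (R : realType) M (v : 'cV[R]_M) : in_U v -> n2 v <= 1.
Proof.
move=> hv; apply: le_trans (inU_abs_sum hv); rewrite n2E; apply: ler_sum => i _.
by case/orP: (inU01 hv i) => /eqP ->; rewrite ?expr0n ?normr0 ?expr1n ?normr1.
Qed.
Arguments inU_n2 {R M v}.

Lemma inU_dot (R : realType) M (b v : 'cV[R]_M) (be : R) : 0 <= be ->
  (forall i, `|b i 0| <= be) -> in_U v -> `|(b^T *m v) 0 0| <= be.
Proof.
move=> be0 hb hv; rewrite mxE; apply: le_trans (ler_norm_sum _ _ _) _.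
apply: (@le_trans _ _ (\sum_i be * `|v i 0|)).
  by apply: ler_sum => i _; rewrite normrM mxE ler_wpM2r.
by rewrite -mulr_sumr -[X in _ <= X]mulr1 ler_wpM2l // inU_abs_sum.
Qed.
Arguments inU_dot {R M b v be}.

Lemma n2_zvec (R : realType) M (x : R) (u d : 'cV[R]_M) :
  n2 (zvec x u d) = x ^+ 2 + n2 u + n2 d.
Proof.
rewrite /zvec !n2E big_split_ord big_ord1 col_mxEu mxE eqxx mulr1n.
rewrite big_split_ord /= -addrA; congr (_ + (_ + _)); apply: eq_bigr => i _.
  by rewrite col_mxEd col_mxEu.
by rewrite !col_mxEd.
Qed.
Arguments n2_zvec {R M}.

Local Unset Implicit Arguments.

Theorem mainTheorem16 (R : realType) (M : nat) (hM : (1 <= M)%N)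
  (abar bbar cbar wbar mubar : R) (habar0 : 0 < abar) (habar1 : abar < 1)
  (hwbar : 0 < wbar)
  (a : R) (b c mu : 'cV[R]_M)
  (ha0 : 0 <= a) (ha1 : a <= abar)
  (hb : forall i, `|b i ord0| <= bbar) (hc : forall i, `|c i ord0| <= cbar)
  (hmu : forall i, `|mu i ord0| <= mubar)
  (x w : nat -> R) (u d : nat -> 'cV[R]_M)
  (hw : forall t, `|w t| <= wbar)
  (hx1 : `|x 1%N| <= wbar)
  (hu : forall t, in_U (u t)) (hd : forall t, in_U (d t))
  (hdu : forall t i, d t i ord0 <= u t i ord0)
  (hdyn : forall t, (1 <= t)%N ->
     x t.+1 = a * x t + (b^T *m u t) ord0 ord0 + (c^T *m d t) ord0 ord0 + w t)
  (lambda1 : R) (hl : 0 < lambda1) (T : nat) :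
  let z := fun t => zvec (x t) (u t) (d t) in
  let Cx := (bbar + cbar + wbar) / (1 - abar) in
  \sum_(1 <= t < T.+1) wnorm2 (invmx (Vbar lambda1 z t)) (z t)
  <= (2 * M + 1)%:R
     * ln (1 + T%:R * (Cx ^+ 2 + 2) / ((2 * M + 1)%:R * lambda1))
     * (2 + (Cx ^+ 2 + 2) / (ln 2 * lambda1)).
Proof.
cbv zeta.
set Cx := (bbar + cbar + wbar) / (1 - abar).
set z := fun t => zvec (x t) (u t) (d t).
pose i0 : 'I_M := Ordinal hM.
have bb0 : 0 <= bbar := le_trans (normr_ge0 _) (hb i0).
have cb0 : 0 <= cbar := le_trans (normr_ge0 _) (hc i0).
have a1 : 0 < 1 - abar by rewrite subr_gt0.
have eCx : Cx * (1 - abar) = bbar + cbar + wbar by rewrite /Cx mulfVK // gt_eqF.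
have wCx : wbar <= Cx.
  have : wbar * (1 - abar) <= wbar.
    have := mulr_ge0 (ltW hwbar) (ltW habar0); rewrite mulrBr mulr1; lra.
  have : 0 <= Cx by rewrite /Cx divr_ge0 ?ltW //; lra.
  nra.
have hx : forall t, (1 <= t)%N -> `|x t| <= Cx.
  elim=> [|t IH] // _; case: (posnP t) => [->|tpos]; first by apply: le_trans hx1 wCx.
  rewrite hdyn //.
  have h1 := IH tpos.
  have h2 := inU_dot bb0 hb (hu t).
  have h3 := inU_dot cb0 hc (hd t).
  have h4 := hw t.
  have h5 : `|a * x t| <= abar * Cx.
    by rewrite normrM ger0_norm // ler_pM // ltW.
  apply: le_trans (ler_normD _ _) _.
  apply: le_trans (lerD (ler_normD _ _) (lexx _)) _.
  apply: le_trans (lerD (lerD (ler_normD _ _) (lexx _)) (lexx _)) _.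
  lra.
have hn2 : forall t, (1 <= t)%N -> n2 (z t) <= Cx ^+ 2 + 2.
  move=> t t1; rewrite /z n2_zvec.
  have := inU_n2 (hu t); have := inU_n2 (hd t).
  have := hx t t1; rewrite ler_norml => /andP [l1 l2].
  nra.
have L0 : 0 <= Cx ^+ 2 + 2 by rewrite addr_ge0 // sqr_ge0.
have := @sum_y_bound R (1 + (M + M)) lambda1 z hl T (Cx ^+ 2 + 2) (ltn0Sn _) L0 hn2.
have -> : (2 * M + 1 = 1 + (M + M))%N by rewrite addnC mul2n addnn.
by [].
Qed.
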